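(* There exists a crystal framework $\mathcal{C}=(G,p)$ in $\mathbb{R}^2$ which is first-order rigid and which is continuously flexible, i.e. there are $t_1>0$ and placements $p_t:V\to\mathbb{R}^2$, $t\in[0,t_1]$, with $p_0=p$, $t\mapsto p_t(v)$ continuous for every vertex $v$, $\|p_t(v)-p_t(w)\|=\|p(v)-p(w)\|$ for every edge $vw\in E$ and every $t$, and such that for some $t$ the placement $p_t$ is not of the form $T\circ p$ for an isometry $T$ of $\mathbb{R}^2$.
   Context: A crystal framework in $\mathbb{R}^d$ is a bar-joint framework $(G,p)$, $G=(V,E)$ a countable simple graph, $p:V\to\mathbb{R}^d$ injective, for which there are $d$ linearly independent vectors $a_1,\dots,a_d$ such that $\mathbb{Z}^d$ acts on $G$ by graph automorphisms $v\mapsto k\cdot v$ with $p(k\cdot v)=p(v)+\sum_ik_ia_i$ and with finitely many orbits of vertices and of edges. An infinitesimal flex is a map $u:V\to\mathbb{C}^d$ with $(u(v)-u(w))\cdot(p(v)-p(w))=0$ for all $vw\in E$; the framework is first-order rigid if every infinitesimal flex lies in the complex linear span of the rigid-motion fields $v\mapsto Sp(v)+b$ ($S$ real skew-symmetric, $b\in\mathbb{R}^d$). *)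

(* Defs.v *)
From HB Require Import structures.
From mathcomp Require Import all_boot all_order all_algebra.
From mathcomp Require Import all_classical all_reals all_analysis.
From mathcomp Require Import Rstruct Rstruct_topology.
From mathcomp.real_closed Require Import complex.

Set Implicit Arguments.
Unset Strict Implicit.
Unset Printing Implicit Defensive.
Import Order.TTheory GRing.Theory Num.Theory.
Local Open Scope ring_scope.

Notation RR := Rdefinitions.R.
Notation CC := (complex RR).
Notation pt := 'cV[RR]_2.

Definition latvec (a1 a2 : pt) (k : int * int) : pt := k.1%:~R *: a1 + k.2%:~R *: a2.

Definition edist (x y : pt) : RR :=
  Num.sqrt (\sum_(i < 2) ((x - y) i 0) ^+ 2).

Definition isometry2 (T : pt -> pt) : Prop :=
  forall x y, edist (T x) (T y) = edist x y.

Definition crystal_framework (V : countType) (E : V -> V -> bool) (p : V -> pt) : Prop :=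
  (forall v w, E v w = E w v) /\ (forall v, ~~ E v v) /\
  injective p /\
  exists (a1 a2 : pt) (act : int * int -> V -> V),
    (forall c1 c2 : RR, c1 *: a1 + c2 *: a2 = 0 -> c1 = 0 /\ c2 = 0) /\
    (forall v, act (0, 0) v = v) /\
    (forall k l v, act (k.1 + l.1, k.2 + l.2) v = act k (act l v)) /\
    (forall k v w, E (act k v) (act k w) = E v w) /\
    (forall k v, p (act k v) = p v + latvec a1 a2 k) /\
    (exists s : seq V, forall v, exists k x, x \in s /\ v = act k x) /\
    (exists s : seq (V * V), forall v w, E v w ->
        exists k x, x \in s /\
          ((v = act k x.1 /\ w = act k x.2) \/ (v = act k x.2 /\ w = act k x.1))).

Definition cplx_pt (x : pt) : 'cV[CC]_2 := map_mx (fun r : RR => (r%:C)%C) x.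

Definition inf_flex (V : countType) (E : V -> V -> bool) (p : V -> pt)
  (u : V -> 'cV[CC]_2) : Prop :=
  forall v w, E v w ->
    \sum_(i < 2) (u v - u w) i 0 * (cplx_pt (p v - p w)) i 0 = 0.

Definition in_rigid_span (V : countType) (p : V -> pt) (u : V -> 'cV[CC]_2) : Prop :=
  exists (n : nat) (lam : 'I_n -> CC) (S : 'I_n -> 'M[RR]_2) (b : 'I_n -> pt),
    (forall i, (S i)^T = - S i) /\
    forall v, u v = \sum_(i < n) lam i *: cplx_pt (S i *m p v + b i).

Definition first_order_rigid (V : countType) (E : V -> V -> bool) (p : V -> pt) : Prop :=
  forall u, inf_flex E p u -> in_rigid_span p u.

Definition continuously_flexible (V : countType) (E : V -> V -> bool) (p : V -> pt) : Prop :=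
  exists (t1 : RR) (P : RR -> V -> pt),
    0 < t1 /\
    P 0 = p /\
    (forall v, {within `[0, t1], continuous (fun t => P t v)}%classic) /\
    (forall t, t \in `[0, t1] -> forall v w, E v w ->
        edist (P t v) (P t w) = edist (p v) (p w)) /\
    (exists t, t \in `[0, t1] /\
        ~ (exists T : pt -> pt, isometry2 T /\ forall v, P t v = T (p v))).

(* Main.v *)
Require Import Defs.
From HB Require Import structures.
From mathcomp Require Import all_boot all_order all_algebra.
From mathcomp Require Import all_classical all_reals all_analysis.
From mathcomp Require Import Rstruct Rstruct_topology.
From mathcomp.real_closed Require Import complex.
From mathcomp Require Import ring lra zify.
From Stdlib Require Import Lia.

Set Implicit Arguments.
Unset Strict Implicit.
Unset Printing Implicit Defensive.
Import Order.TTheory GRing.Theory Num.Theory.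
Local Open Scope ring_scope.
Notation VV := (int * int * 'I_5)%type.

Definition mkpt (x y : RR) : pt := \col_(i < 2) (if i == ord0 then x else y).

Lemma mkpt0 x y : mkpt x y ord0 ord0 = x. Proof. by rewrite !mxE. Qed.
Lemma mkpt1 x y : mkpt x y (@Ordinal 2 1 isT) ord0 = y. Proof. by rewrite !mxE. Qed.

Definition O0 : 'I_5 := @Ordinal 5 0 isT.
Definition O1 : 'I_5 := @Ordinal 5 1 isT.
Definition O2 : 'I_5 := @Ordinal 5 2 isT.
Definition O3 : 'I_5 := @Ordinal 5 3 isT.
Definition O4 : 'I_5 := @Ordinal 5 4 isT.

Definition oxz (s : 'I_5) : int :=
  match val s with 0 => 0 | 1 => 5 | 2 => 6 | 3 => 5 | _ => 10 end.
Definition oyz (s : 'I_5) : int :=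
  match val s with 0 => 0 | 1 => 0 | 2 => -5 | 3 => 1 | _ => 0 end.

Definition Xz (v : VV) : int := - v.1.1 + 5 * v.1.2 + oxz v.2.
Definition Yz (v : VV) : int := v.1.1 + 6 * v.1.2 + oyz v.2.

Definition pp (v : VV) : pt := mkpt (Xz v)%:~R (Yz v)%:~R.

Definition a1 : pt := mkpt (-1) 1.
Definition a2 : pt := mkpt 5 6.

Definition etypes : seq ('I_5 * 'I_5 * (int * int)) :=
  [:: (O0, O0, (1, 0)); (O0, O0, (0, 1)); (O0, O0, (-1, 1));
      (O0, O1, (0, 0)); (O0, O2, (0, 0)); (O1, O2, (0, 0));
      (O0, O3, (0, -1)); (O0, O4, (0, -1)); (O3, O4, (0, 0));
      (O1, O4, (0, 0)); (O3, O2, (1, 0))].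

Definition epred (v w : VV) (e : 'I_5 * 'I_5 * (int * int)) : bool :=
  [&& e.1.1 == v.2, e.1.2 == w.2, w.1.1 == v.1.1 + e.2.1 & w.1.2 == v.1.2 + e.2.2].

Definition E1 (v w : VV) : bool := has (epred v w) etypes.
Definition EE (v w : VV) : bool := E1 v w || E1 w v.

Definition act (k : int * int) (v : VV) : VV := (v.1.1 + k.1, v.1.2 + k.2, v.2).

Lemma eq_addr_self (i d : int) : (i == i + d) = (d == 0).
Proof. by rewrite -{1}(addr0 i) (inj_eq (@addrI _ i)) eq_sym. Qed.

Lemma ord5_cases (s : 'I_5) : s = O0 \/ s = O1 \/ s = O2 \/ s = O3 \/ s = O4.
Proof.
case: s => [[|[|[|[|[|n]]]]] H].
- by left; apply: val_inj.
- by right; left; apply: val_inj.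
- by right; right; left; apply: val_inj.
- by right; right; right; left; apply: val_inj.
- by right; right; right; right; apply: val_inj.
- by [].
Qed.

Lemma EE_irr v : ~~ EE v v.
Proof.
rewrite /EE orbb /E1 /epred /=.
case: v => [[i j] s] /=; rewrite !eq_addr_self.
by case: (ord5_cases s) => [->|[->|[->|[->|->]]]].
Qed.

Lemma pp_inj : injective pp.
Proof.
move=> [[i j] s] [[i' j'] s'] H.
have H0 := congr1 (fun M : pt => M ord0 ord0) H.
have H1 := congr1 (fun M : pt => M (@Ordinal 2 1 isT) ord0) H.
rewrite /= /pp !mkpt0 !mkpt1 in H0 H1.
move/eqP: H0; rewrite eqr_int => /eqP H0.
move/eqP: H1; rewrite eqr_int => /eqP H1.
rewrite /Xz /Yz /= in H0 H1.
move: H0 H1.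
case: (ord5_cases s) => [->|[->|[->|[->|->]]]]; case: (ord5_cases s') => [->|[->|[->|[->|->]]]];
  rewrite /oxz /oyz /O0 /O1 /O2 /O3 /O4 /= => H0 H1;
  first [ lia | by have [-> ->] : i = i' /\ j = j' by lia ].
Qed.

Lemma ord2_cases (r : 'I_2) : r = ord0 \/ r = @Ordinal 2 1 isT.
Proof. case: r => [[|[|n]] H]; [left|right|by []]; exact: val_inj. Qed.

Lemma latvecE (k : int * int) :
  latvec a1 a2 k = mkpt (- k.1 + 5 * k.2)%:~R (k.1 + 6 * k.2)%:~R.
Proof.
apply/matrixP => r c; rewrite /latvec /a1 /a2 /mkpt !mxE.
case: (ord2_cases r) => -> /=; rewrite !(intrD, intrM, intrN) /=; ring.
Qed.

Lemma crystal : crystal_framework EE pp.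
Proof.
split; first by move=> v w; rewrite /EE orbC.
split; first exact: EE_irr.
split; first exact: pp_inj.
exists a1, a2, act.
split.
  move=> c1 c2 H.
  have H0 := congr1 (fun M : pt => M ord0 ord0) H.
  have H1 := congr1 (fun M : pt => M (@Ordinal 2 1 isT) ord0) H.
  rewrite /= /a1 /a2 !mxE /= in H0 H1.
  split; lra.
split; first by move=> [[i j] s]; rewrite /act /= !addr0.
split.
  move=> k l [[i j] s]; rewrite /act /=.
  by rewrite (addrC k.1) (addrC k.2) !addrA.
split.
  move=> k v w.
  have H : forall v w, E1 (act k v) (act k w) = E1 v w.
    move=> {}v {}w; apply: eq_has => e; rewrite /epred /act /=.
    by rewrite [v.1.1 + k.1 + _]addrAC [v.1.2 + k.2 + _]addrAC !(inj_eq (addIr _)).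
  by rewrite /EE !H.
split.
  move=> k [[i j] s]; rewrite latvecE /pp /act /Xz /Yz /=.
  apply/matrixP => r c; rewrite !mxE.
  case: (ord2_cases r) => -> /=; rewrite !(intrD, intrM, intrN) /=; ring.
split.
  exists [seq ((0 : int), (0 : int), t) | t <- enum 'I_5] => v.
  exists (v.1.1, v.1.2), (0, 0, v.2); split.
    by apply: map_f; rewrite mem_enum.
  by case: v => [[i j] s]; rewrite /act /= !add0r.
exists [seq (((0 : int), (0 : int), e.1.1), (e.2.1, e.2.2, e.1.2)) | e <- etypes].
move=> v w /orP [] /hasP [e He]; rewrite /epred => /and4P [/eqP H1 /eqP H2 /eqP H3 /eqP H4].
  exists (v.1.1, v.1.2), ((0, 0, e.1.1), (e.2.1, e.2.2, e.1.2)); split.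
    by apply: (map_f (fun e : 'I_5 * 'I_5 * (int * int) => _)).
  left; case: v w H1 H2 H3 H4 => [[i j] s] [[i' j'] s'] /= H1 H2 H3 H4.
  by rewrite /act /= !add0r H1 H2 H3 H4 (addrC e.2.1) (addrC e.2.2).
exists (w.1.1, w.1.2), ((0, 0, e.1.1), (e.2.1, e.2.2, e.1.2)); split.
  by apply: (map_f (fun e : 'I_5 * 'I_5 * (int * int) => _)).
right; case: v w H1 H2 H3 H4 => [[i j] s] [[i' j'] s'] /= H1 H2 H3 H4.
by rewrite /act /= !add0r H1 H2 H3 H4 (addrC e.2.1) (addrC e.2.2).
Qed.

Lemma int_ind2 (Q : int -> Prop) : Q 0 -> (forall n, Q n -> Q (n + 1)) ->
  (forall n, Q n -> Q (n - 1)) -> forall n, Q n.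
Proof.
move=> H0 Hu Hd n; elim/int_ind: n => //.
  by move=> n Hn; rewrite -addn1 PoszD; apply: Hu.
by move=> n Hn; rewrite -addn1 PoszD opprD; apply: Hd.
Qed.

Definition i1 : 'I_2 := @Ordinal 2 1 isT.

Lemma mkE e v w : e \in etypes -> e.1.1 = v.2 -> e.1.2 = w.2 ->
  w.1.1 = v.1.1 + e.2.1 -> w.1.2 = v.1.2 + e.2.2 -> EE v w.
Proof.
move=> He H1 H2 H3 H4; apply/orP; left; apply/hasP; exists e => //.
by rewrite /epred H1 H2 H3 H4 !eqxx.
Qed.

Lemma EEsym v w : EE v w -> EE w v.
Proof. by rewrite /EE orbC. Qed.

Definition CX (v w : VV) : CC := (Xz v - Xz w)%:~R.
Definition CY (v w : VV) : CC := (Yz v - Yz w)%:~R.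

Lemma zero_lemma (z0 z1 : CC) (a b c d : int) :
  z0 * a%:~R + z1 * b%:~R = 0 -> z0 * c%:~R + z1 * d%:~R = 0 ->
  a * d - b * c != 0 -> z0 = 0 /\ z1 = 0.
Proof.
move=> H1 H2 Hdet.
have Hd : ((a * d - b * c)%:~R : CC) != 0 by rewrite intr_eq0.
have E0 : z0 * (a * d - b * c)%:~R = d%:~R * (z0 * a%:~R + z1 * b%:~R) - b%:~R * (z0 * c%:~R + z1 * d%:~R).
  rewrite !(intrD, intrM, intrN); ring.
have E1 : z1 * (a * d - b * c)%:~R = a%:~R * (z0 * c%:~R + z1 * d%:~R) - c%:~R * (z0 * a%:~R + z1 * b%:~R).
  rewrite !(intrD, intrM, intrN); ring.
rewrite H1 H2 !mulr0 subr0 in E0 E1.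
split.
  by move/eqP: E0; rewrite mulf_eq0 (negbTE Hd) orbF => /eqP.
by move/eqP: E1; rewrite mulf_eq0 (negbTE Hd) orbF => /eqP.
Qed.

Definition Wflex (W0 W1 : VV -> CC) :=
  forall v w, EE v w -> (W0 v - W0 w) * CX v w + (W1 v - W1 w) * CY v w = 0.

Definition Zr (W0 W1 : VV -> CC) v := W0 v = 0 /\ W1 v = 0.

Lemma CXE v w a : Xz v - Xz w = a -> CX v w = a%:~R.
Proof. by rewrite /CX => ->. Qed.
Lemma CYE v w a : Yz v - Yz w = a -> CY v w = a%:~R.
Proof. by rewrite /CY => ->. Qed.

Lemma zero2 W0 W1 v q1 q2 (a b c d : int) : Wflex W0 W1 ->
  EE v q1 -> EE v q2 -> Zr W0 W1 q1 -> Zr W0 W1 q2 ->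
  Xz v - Xz q1 = a -> Yz v - Yz q1 = b -> Xz v - Xz q2 = c -> Yz v - Yz q2 = d ->
  a * d - b * c != 0 -> Zr W0 W1 v.
Proof.
move=> HW E1 E2 [Z10 Z11] [Z20 Z21] Ha Hb Hc Hd Hdet.
have := HW _ _ E1; rewrite Z10 Z11 !subr0 (CXE Ha) (CYE Hb) => H1.
have := HW _ _ E2; rewrite Z20 Z21 !subr0 (CXE Hc) (CYE Hd) => H2.
exact: (zero_lemma H1 H2 Hdet).
Qed.

Lemma dead W0 W1 z c x cx (l a b e f : int) : Wflex W0 W1 ->
  EE z c -> Zr W0 W1 c -> EE x z -> EE x cx -> Zr W0 W1 cx ->
  Xz x - Xz z = l * (Xz x - Xz cx) -> Yz x - Yz z = l * (Yz x - Yz cx) ->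
  Xz z - Xz c = a -> Yz z - Yz c = b -> Xz x - Xz z = e -> Yz x - Yz z = f ->
  a * f - b * e != 0 -> Zr W0 W1 z.
Proof.
move=> HW Ezc [Zc0 Zc1] Exz Excx [Zx0 Zx1] Hl1 Hl2 Ha Hb He Hf Hdet.
have H1 := HW _ _ Ezc; rewrite Zc0 Zc1 !subr0 (CXE Ha) (CYE Hb) in H1.
have H2 := HW _ _ Excx; rewrite Zx0 Zx1 !subr0 in H2.
have H3 := HW _ _ Exz.
have H4 : W0 z * e%:~R + W1 z * f%:~R = 0.
  rewrite /CX /CY Hl1 Hl2 in H3.
  rewrite -He -Hf Hl1 Hl2.
  rewrite !intrM in H3 *.
  have -> : W0 z * ((l)%:~R * (Xz x - Xz cx)%:~R) + W1 z * ((l)%:~R * (Yz x - Yz cx)%:~R)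
     = l%:~R * (W0 x * CX x cx + W1 x * CY x cx) -
       ((W0 x - W0 z) * ((l)%:~R * (Xz x - Xz cx)%:~R) + (W1 x - W1 z) * ((l)%:~R * (Yz x - Yz cx)%:~R)).
    rewrite /CX /CY; ring.
  by rewrite H2 H3 mulr0 subr0.
exact: (zero_lemma H1 H4 Hdet).
Qed.

Ltac edge1 e := apply: (@mkE e); [by [] | by [] | by [] | rewrite /=; lia | rewrite /=; lia].
Ltac edge0 := first [
  edge1 (O0, O0, ((1:int), (0:int))) | edge1 (O0, O0, ((0:int), (1:int))) |
  edge1 (O0, O0, ((-1:int), (1:int))) | edge1 (O0, O1, ((0:int), (0:int))) |
  edge1 (O0, O2, ((0:int), (0:int))) | edge1 (O1, O2, ((0:int), (0:int))) |
  edge1 (O0, O3, ((0:int), (-1:int))) | edge1 (O0, O4, ((0:int), (-1:int))) |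
  edge1 (O3, O4, ((0:int), (0:int))) | edge1 (O1, O4, ((0:int), (0:int))) |
  edge1 (O3, O2, ((1:int), (0:int))) ].
Ltac edge := first [ edge0 | apply: EEsym; edge0 ].
Ltac xy := rewrite /Xz /Yz /oxz /oyz /O0 /O1 /O2 /O3 /O4 /=; lia.

Lemma test_edge (i j : int) : EE (i, j - 1, O0) (i + 1, j - 1 - 1 + 1, O0).
Proof. edge. Qed.

Ltac z2 a b c d := apply: (@zero2 _ _ _ _ _ a b c d); [ assumption | edge | edge | assumption | assumption | xy | xy | xy | xy | by [] ].

Lemma backbone W0 W1 : Wflex W0 W1 -> Zr W0 W1 (0, 0, O0) -> Zr W0 W1 (1, 0, O0) ->
  forall i j, Zr W0 W1 (i, j, O0).
Proof.
move=> HW Z00 Z10.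
pose P i j := Zr W0 W1 (i, j, O0) /\ Zr W0 W1 (i + 1, j, O0).
have up i j : P i j -> P i (j + 1).
  move=> [H1 H2].
  have H3 : Zr W0 W1 (i, j + 1, O0).
    apply: (@zero2 _ _ _ (i, j, O0) (i + 1, j, O0) 5 6 6 5) => //; try edge; try xy.
  split => //.
  apply: (@zero2 _ _ _ (i + 1, j, O0) (i, j + 1, O0) 5 6 (-1) 1) => //; try edge; try xy.
have down i j : P i j -> P i (j - 1).
  move=> [H1 H2].
  have H3 : Zr W0 W1 (i + 1, j - 1, O0).
    apply: (@zero2 _ _ _ (i + 1, j, O0) (i, j, O0) (-5) (-6) (-6) (-5)) => //; try edge; try xy.
  split => //.
  apply: (@zero2 _ _ _ (i, j, O0) (i + 1, j - 1, O0) (-5) (-6) 1 (-1)) => //; try edge; try xy.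
have col0 : forall j, P 0 j.
  apply: int_ind2; first by rewrite /P add0r.
    exact: up.
  exact: down.
have right i : (forall j, P i j) -> forall j, P (i + 1) j.
  move=> H j; have [H1 H2] := H j; have [H3 H4] := H (j + 1).
  split => //.
  apply: (@zero2 _ _ _ (i + 1, j, O0) (i + 1, j + 1, O0) (-1) 1 (-6) (-5)) => //; try edge; try xy.
have left i : (forall j, P i j) -> forall j, P (i - 1) j.
  move=> H j; have [H1 H2] := H j; have [H3 H4] := H (j - 1).
  have E : i - 1 + 1 = i by rewrite subrK.
  split; last by rewrite E.
  apply: (@zero2 _ _ _ (i, j, O0) (i, j - 1, O0) 1 (-1) 6 5) => //; try edge; try xy.
have all : forall i j, P i j.
  apply: int_ind2; [exact: col0 | exact: right | exact: left].
by move=> i j; case: (all i j).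
Qed.

Lemma all_zero W0 W1 : Wflex W0 W1 -> Zr W0 W1 (0, 0, O0) -> Zr W0 W1 (1, 0, O0) ->
  forall v, Zr W0 W1 v.
Proof.
move=> HW Z00 Z10.
have Bk := backbone HW Z00 Z10.
have zB i j : Zr W0 W1 (i, j, O4).
  apply: (@dead _ _ _ (i, j + 1, O0) (i, j, O1) (i, j, O0) (-1) 5 (-6) (-5) 0) => //;
    try edge; try xy.
have xB i j : Zr W0 W1 (i, j, O3).
  apply: (@zero2 _ _ _ (i, j + 1, O0) (i, j, O4) 0 (-5) (-5) 1) => //; try edge; try xy.
have zA i j : Zr W0 W1 (i, j, O2).
  apply: (@dead _ _ _ (i, j, O0) (i - 1, j, O3) (i - 1, j + 1, O0) (-1) 6 (-5) 0 5) => //;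
    try edge; try xy.
have xA i j : Zr W0 W1 (i, j, O1).
  apply: (@zero2 _ _ _ (i, j, O0) (i, j, O2) 5 0 (-1) 5) => //; try edge; try xy.
move=> [[i j] s]; case: (ord5_cases s) => [->|[->|[->|[->|->]]]]; by [].
Qed.

Lemma flex_eq (u : VV -> 'cV[CC]_2) : inf_flex EE pp u ->
  forall v w, EE v w ->
  (u v ord0 ord0 - u w ord0 ord0) * CX v w + (u v i1 ord0 - u w i1 ord0) * CY v w = 0.
Proof.
move=> Hu v w E; have := Hu v w E.
rewrite !big_ord_recl big_ord0 addr0 /cplx_pt /pp /mkpt !mxE /=.
have -> : lift ord0 (ord0 : 'I_1) = i1 by apply: val_inj.
by rewrite -!intrB !rmorph_int.
Qed.

Definition Jm : 'M[RR]_2 :=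
  \matrix_(r, c) (if (r == ord0) && (c == i1) then -1 else if (r == i1) && (c == ord0) then 1 else 0).

Lemma rigid : first_order_rigid EE pp.
Proof.
move=> u Hu.
have HE := flex_eq Hu.
pose b0 := u (0, 0, O0) ord0 ord0.
pose b1 := u (0, 0, O0) i1 ord0.
pose om := - (u (1, 0, O0) ord0 ord0 - b0).
pose W0 v := u v ord0 ord0 - (- om * (Yz v)%:~R + b0).
pose W1 v := u v i1 ord0 - (om * (Xz v)%:~R + b1).
have HW : Wflex W0 W1.
  move=> v w E; have H := HE v w E.
  rewrite -H /W0 /W1 /CX /CY !intrB; ring.
have Z00 : Zr W0 W1 (0, 0, O0).
  rewrite /Zr /W0 /W1.
  have -> : Xz (0, 0, O0) = 0 by [].
  have -> : Yz (0, 0, O0) = 0 by [].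
  by rewrite !mulr0 !add0r !subrr.
have Z10 : Zr W0 W1 (1, 0, O0).
  have H := HE (1, 0, O0) (0, 0, O0) ltac:(edge).
  rewrite /CX /CY in H.
  have hx1 : Xz (1, 0, O0) = -1 by [].
  have hy1 : Yz (1, 0, O0) = 1 by [].
  have hx0 : Xz (0, 0, O0) = 0 by [].
  have hy0 : Yz (0, 0, O0) = 0 by [].
  rewrite hx1 hy1 hx0 hy0 in H.
  rewrite /Zr /W0 /W1 hx1 hy1; split.
    rewrite /om; ring.
  rewrite !subr0 in H; rewrite -H /om /b1 /b0; ring.
have Z := all_zero HW Z00 Z10.
exists 3%N, (fun k : 'I_3 => if val k == 0%N then om else if val k == 1%N then b0 else b1),
  (fun k : 'I_3 => if val k == 0%N then Jm else 0),
  (fun k : 'I_3 => if val k == 0%N then 0 else if val k == 1%N then mkpt 1 0 else mkpt 0 1).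
split.
  move=> k; case: (val k == 0%N); last by rewrite trmx0 oppr0.
  apply/matrixP => r c; rewrite !mxE.
  by case: (ord2_cases r) => ->; case: (ord2_cases c) => -> /=; rewrite ?oppr0 ?opprK.
move=> v; apply/matrixP => r c.
have -> : c = ord0 by apply: ord1.
rewrite summxE !big_ord_recl big_ord0 addr0 /=.
rewrite !mxE /= !big_ord_recl big_ord0 /= !mxE /=.
have [Z0 Z1] := Z v.
move/eqP: Z0; rewrite subr_eq0 => /eqP Z0.
move/eqP: Z1; rewrite subr_eq0 => /eqP Z1.
rewrite !big_ord0 !(mul0r, mul1r, add0r, addr0, mulN1r).
case: (ord2_cases r) => -> /=.
  rewrite Z0 !(rmorphN, rmorph_int, rmorph0, rmorph1, mulr0, mulr1, addr0); ring.
rewrite Z1 !(rmorphN, rmorph_int, rmorph0, rmorph1, mulr0, mulr1, addr0, add0r); ring.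
Qed.

Definition Dn (s : RR) : RR := 3/5 * s ^+ 2 - s + 3/5.
Definition psi (s : RR) : RR := s ^+ 2 / Dn s.
Definition Qd (y : RR) : RR := y ^+ 2 + 4 * (3/5) * y * (1 - 3/5 * y).
Definition Mx (y : RR) : RR := Num.max (2 * (1 - 3/5 * y)) 1.
Definition chi (y : RR) : RR := (- y + Num.sqrt (Qd y)) / Mx y.

Lemma Dn_gt0 s : 0 < Dn s.
Proof.
have H : Dn s = 3/5 * (s - 5/6) ^+ 2 + 11/60 by rewrite /Dn; field.
rewrite H; have := sqr_ge0 (s - 5/6); lra.
Qed.

Lemma psi_0 : psi 0 = 0.
Proof. by rewrite /psi expr0n /= mul0r. Qed.

Lemma psi_range s : 0 <= s <= 1/3 -> 0 <= psi s <= 1/3.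
Proof.
move=> /andP [h0 h1]; have hD := Dn_gt0 s.
rewrite /psi; apply/andP; split.
  by apply: divr_ge0; [exact: sqr_ge0 | exact: ltW].
rewrite ler_pdivrMr //.
have hp : 0 <= (1/3 - s) * (4 * s + 3) by apply: mulr_ge0; lra.
have -> : 1/3 * Dn s = s ^+ 2 + 1/5 * ((1/3 - s) * (4 * s + 3)) by rewrite /Dn; field.
lra.
Qed.

Lemma Mx_eq y : 0 <= y <= 1/3 -> Mx y = 2 * (1 - 3/5 * y).
Proof. move=> /andP [h0 h1]; rewrite /Mx; apply/max_idPl; lra. Qed.

Lemma chi_0 : chi 0 = 0.
Proof. by rewrite /chi /Qd !(expr0n, mul0r, mulr0, add0r, oppr0, sqrtr0) /=. Qed.

Lemma chi_prop y : 0 <= y <= 1/3 -> 0 <= chi y <= 1/3 /\ psi (chi y) = y.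
Proof.
move=> hy; have := hy => /andP [h0 h1].
have hM := Mx_eq hy.
have hc : 0 <= 1 - 3/5 * y by lra.
have hyc : 0 <= y * (1 - 3/5 * y) by apply: mulr_ge0.
have hQ : 0 <= Qd y by rewrite /Qd; lra.
have hr0 : 0 <= Num.sqrt (Qd y) by exact: sqrtr_ge0.
have hr2 : Num.sqrt (Qd y) ^+ 2 = Qd y by exact: sqr_sqrtr.
move: hr0 hr2; set r := Num.sqrt (Qd y) => hr0 hr2.
rewrite /Qd in hr2.
have hm : 0 < 2 * (1 - 3/5 * y) by lra.
have hm0 : 2 * (1 - 3/5 * y) != 0 by rewrite gt_eqF.
have hsE : chi y = (r - y) / (2 * (1 - 3/5 * y)) by rewrite /chi hM -/r addrC.
have hry : y <= r.
  rewrite -ler_sqr ?nnegrE //; rewrite hr2; lra.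
have hr1 : r <= y + 2 * (1 - 3/5 * y) / 3.
  rewrite -ler_sqr ?nnegrE //; last by lra.
  have hp : 0 <= (1 - 3/5 * y) * (1 - 3 * y) by apply: mulr_ge0; lra.
  have -> : (y + 2 * (1 - 3/5 * y) / 3) ^+ 2 = r ^+ 2 + 4/9 * ((1 - 3/5 * y) * (1 - 3 * y)).
    by rewrite hr2; field.
  lra.
set s := chi y.
have hs : s * (2 * (1 - 3/5 * y)) = r - y by rewrite /s hsE divfK.
have hs0 : 0 <= s by rewrite /s hsE; apply: divr_ge0; lra.
have hs1 : s <= 1/3.
  rewrite /s hsE ler_pdivrMr //; lra.
split; first by rewrite hs0 hs1.
have Hq : 4 * (1 - 3/5 * y) * ((1 - 3/5 * y) * s ^+ 2 + y * s - 3/5 * y) = 0.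
  have -> : 4 * (1 - 3/5 * y) * ((1 - 3/5 * y) * s ^+ 2 + y * s - 3/5 * y)
     = (s * (2 * (1 - 3/5 * y))) ^+ 2 + 2 * y * (s * (2 * (1 - 3/5 * y)))
       - 4 * (3/5) * y * (1 - 3/5 * y) by field.
  rewrite hs.
  have -> : (r - y) ^+ 2 + 2 * y * (r - y) = r ^+ 2 - y ^+ 2 by ring.
  by rewrite hr2; field.
have Hq2 : (1 - 3/5 * y) * s ^+ 2 + y * s - 3/5 * y = 0.
  move/eqP: Hq; rewrite mulf_eq0 => /orP [|/eqP //].
  move/eqP => H; exfalso; lra.
have hD := Dn_gt0 s.
rewrite /psi.
have -> : s ^+ 2 = y * Dn s.
  apply/eqP; rewrite -subr_eq0; apply/eqP; rewrite -Hq2 /Dn; by field.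
by rewrite mulfK // gt_eqF.
Qed.

Lemma cont_add (f g : RR -> RR) : continuous f -> continuous g -> continuous (fun x => f x + g x).
Proof. move=> hf hg x. have := (@continuousD _ RR^o _ f g x (hf x) (hg x)). exact. Qed.
Lemma cont_mul (f g : RR -> RR) : continuous f -> continuous g -> continuous (fun x => f x * g x).
Proof. move=> hf hg x. have := (@continuousM _ _ f g x (hf x) (hg x)). exact. Qed.
Lemma cont_opp (f : RR -> RR) : continuous f -> continuous (fun x => - f x).
Proof. move=> hf x. have := (@continuousN _ RR^o _ f x (hf x)). exact. Qed.
Lemma cont_inv (f : RR -> RR) : continuous f -> (forall x, f x != 0) -> continuous (fun x => (f x)^-1).
Proof. move=> hf hn x. have := (@continuousV _ _ f x (hn x) (hf x)). exact. Qed.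
Lemma cont_id : continuous (fun x : RR => x).
Proof. move=> x; exact: cvg_id. Qed.
Lemma cont_cst (c : RR) : continuous (fun _ : RR => c).
Proof. move=> x; exact: cvg_cst. Qed.
Lemma cont_comp (f g : RR -> RR) : continuous f -> continuous g -> continuous (fun x => g (f x)).
Proof. move=> hf hg x; apply: continuous_comp; [exact: hf | exact: hg]. Qed.
Lemma cont_sqrt (f : RR -> RR) : continuous f -> continuous (fun x => Num.sqrt (f x)).
Proof. move=> hf; apply: (cont_comp hf); exact: sqrt_continuous. Qed.
Lemma cont_max (f g : RR -> RR) : continuous f -> continuous g -> continuous (fun x => Num.max (f x) (g x)).
Proof. move=> hf hg x. have := (@continuous_max _ _ f g x (hf x) (hg x)). exact. Qed.

Lemma psi_cont : continuous psi.
Proof.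
have -> : psi = (fun s => (s * s) * (3/5 * (s * s) - s + 3/5)^-1).
  by apply: funext => s; rewrite /psi /Dn expr2.
apply: cont_mul; first exact: (cont_mul cont_id cont_id).
apply: cont_inv.
  apply: cont_add; last exact: cont_cst.
  apply: cont_add; last exact: (cont_opp cont_id).
  apply: cont_mul; [exact: cont_cst | exact: (cont_mul cont_id cont_id)].
by move=> x; have := Dn_gt0 x; rewrite /Dn expr2 => /gt_eqF ->.
Qed.

Lemma chi_cont : continuous chi.
Proof.
have -> : chi = (fun y => (- y + Num.sqrt (y * y + 4 * (3/5) * y * (1 - 3/5 * y)))
     * (Num.max (2 * (1 - 3/5 * y)) 1)^-1).
  by apply: funext => y; rewrite /chi /Qd /Mx expr2.
apply: cont_mul.
  apply: cont_add; first exact: (cont_opp cont_id).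
  apply: cont_sqrt; apply: cont_add; first exact: (cont_mul cont_id cont_id).
  apply: cont_mul.
    apply: cont_mul; [apply: cont_mul; exact: cont_cst | exact: cont_id].
  apply: cont_add; first exact: cont_cst.
  apply: cont_opp; apply: cont_mul; [exact: cont_cst | exact: cont_id].
apply: cont_inv.
  apply: cont_max; last exact: cont_cst.
  apply: cont_mul; first exact: cont_cst.
  apply: cont_add; first exact: cont_cst.
  apply: cont_opp; apply: cont_mul; [exact: cont_cst | exact: cont_id].
move=> y; apply: lt0r_neq0; apply: (@lt_le_trans _ _ 1); first by [].

by rewrite le_max lexx orbT.
Qed.

Definition Sq (n : int) (t : RR) : RR :=
  match n with Posz k => iter k psi t | Negz k => iter k.+1 chi t end.

Lemma iter_cont (f : RR -> RR) k : continuous f -> continuous (iter k f).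
Proof.
move=> hf; elim: k => [|k IH] /=; first exact: cont_id.
exact: (cont_comp IH hf).
Qed.

Lemma Sq_cont n : continuous (Sq n).
Proof. case: n => k /=; apply: iter_cont; [exact: psi_cont | exact: chi_cont]. Qed.

Lemma Sq_zero n : Sq n 0 = 0.
Proof.
case: n => k /=.
  by elim: k => [|k IH] //=; rewrite IH psi_0.
by elim: k => [|k IH] /=; [rewrite chi_0 | rewrite IH chi_0].
Qed.

Definition I3 (t : RR) := 0 <= t <= 1/3.

Lemma Sq_range t n : I3 t -> I3 (Sq n t).
Proof.
move=> ht; case: n => k /=.
  elim: k => [|k IH] //=; exact: psi_range.
elim: k => [|k IH] /=; first by case: (chi_prop ht).
by case: (chi_prop IH).
Qed.

Lemma Sq_succ t n : I3 t -> Sq (n + 1) t = psi (Sq n t).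
Proof.
move=> ht; case: n => k.
  have -> : Posz k + 1 = Posz k.+1 by rewrite -addn1 PoszD.
  by [].
case: k => [|k].
  have -> : Negz 0 + 1 = 0 by [].
  by rewrite /= ; case: (chi_prop ht).
have -> : Negz k.+1 + 1 = Negz k by rewrite !NegzE; lia.
have := Sq_range (Negz k) ht; rewrite /= => hr.
by case: (chi_prop hr).
Qed.

Definition rx (tau a b : RR) : RR := ((1 - tau ^+ 2) * a - 2 * tau * b) / (1 + tau ^+ 2).
Definition ry (tau a b : RR) : RR := (2 * tau * a + (1 - tau ^+ 2) * b) / (1 + tau ^+ 2).

Definition offx (s : 'I_5) : RR :=
  match val s with 0 => 0 | 1 => 5 | 2 => 6 | 3 => 0 | _ => 5 end.
Definition offy (s : 'I_5) : RR :=
  match val s with 0 => 0 | 1 => 0 | 2 => -5 | 3 => -5 | _ => -6 end.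

Definition tau (t : RR) (v : VV) : RR :=
  match val v.2 with 0 => 0 | 1 | 2 => Sq (2 * v.1.1) t | _ => - Sq (2 * v.1.1 + 1) t end.

Definition PP (t : RR) (v : VV) : pt :=
  pp v + mkpt (rx (tau t v) (offx v.2) (offy v.2) - offx v.2)
              (ry (tau t v) (offx v.2) (offy v.2) - offy v.2).

Lemma tau0 v : tau 0 v = 0.
Proof. by rewrite /tau !Sq_zero oppr0; case: (val v.2) => [|[|[|]]]. Qed.

Lemma rx0 a b : rx 0 a b = a.
Proof. by rewrite /rx expr0n /= !(subr0, addr0, mul1r, mul0r, mulr0, divr1). Qed.
Lemma ry0 a b : ry 0 a b = b.
Proof. by rewrite /ry expr0n /= !(subr0, addr0, add0r, mul1r, mul0r, mulr0, divr1). Qed.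

Lemma PP0 : PP 0 = pp.
Proof.
apply: funext => v; rewrite /PP tau0 rx0 ry0 !subrr.
have -> : mkpt 0 0 = 0 by apply/matrixP => r c; rewrite !mxE; case: (_ == _).
by rewrite addr0.
Qed.

Lemma opp1sq_neq0 (x : RR) : 1 + x ^+ 2 != 0.
Proof. apply: lt0r_neq0; have := sqr_ge0 x; lra. Qed.

Lemma rx_cont a b (f : RR -> RR) : continuous f -> continuous (fun t => rx (f t) a b).
Proof.
move=> hf; rewrite /rx.
have -> : (fun t => ((1 - f t ^+ 2) * a - 2 * f t * b) / (1 + f t ^+ 2)) =
  (fun t => ((1 + - (f t * f t)) * a + - (2 * f t * b)) * (1 + f t * f t)^-1).
  by apply: funext => t; rewrite expr2.
apply: cont_mul.
  apply: cont_add.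
    apply: cont_mul; last exact: cont_cst.
    apply: cont_add; first exact: cont_cst.
    by apply: cont_opp; apply: cont_mul; exact: hf.
  apply: cont_opp; apply: cont_mul; [apply: cont_mul; [exact: cont_cst | exact: hf] | exact: cont_cst].
apply: cont_inv.
  apply: cont_add; first exact: cont_cst.
  by apply: cont_mul; exact: hf.
by move=> t; rewrite -expr2 opp1sq_neq0.
Qed.

Lemma ry_cont a b (f : RR -> RR) : continuous f -> continuous (fun t => ry (f t) a b).
Proof.
move=> hf; rewrite /ry.
have -> : (fun t => (2 * f t * a + (1 - f t ^+ 2) * b) / (1 + f t ^+ 2)) =
  (fun t => (2 * f t * a + (1 + - (f t * f t)) * b) * (1 + f t * f t)^-1).
  by apply: funext => t; rewrite expr2.
apply: cont_mul.
  apply: cont_add.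
    apply: cont_mul; [apply: cont_mul; [exact: cont_cst | exact: hf] | exact: cont_cst].
  apply: cont_mul; last exact: cont_cst.
  apply: cont_add; first exact: cont_cst.
  by apply: cont_opp; apply: cont_mul; exact: hf.
apply: cont_inv.
  apply: cont_add; first exact: cont_cst.
  by apply: cont_mul; exact: hf.
by move=> t; rewrite -expr2 opp1sq_neq0.
Qed.

Lemma tau_cont v : continuous (fun t => tau t v).
Proof.
rewrite /tau; case: (val v.2) => [|[|[|]]] /=; try exact: cont_cst; try exact: Sq_cont.
move=> n; apply: cont_opp; exact: Sq_cont.
Qed.

Lemma mkptE x y : mkpt x y = x *: mkpt 1 0 + y *: mkpt 0 1.
Proof.
apply/matrixP => r c; rewrite !mxE; case: (_ == _); rewrite ?mulr1 ?mulr0 ?addr0 ?add0r //.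
Qed.

Lemma PP_cont v : continuous (fun t => PP t v).
Proof.
move=> t0; rewrite /PP.
have -> : (fun t => pp v + mkpt (rx (tau t v) (offx v.2) (offy v.2) - offx v.2)
              (ry (tau t v) (offx v.2) (offy v.2) - offy v.2)) =
  (fun t => pp v + ((rx (tau t v) (offx v.2) (offy v.2) - offx v.2) *: mkpt 1 0 +
              (ry (tau t v) (offx v.2) (offy v.2) - offy v.2) *: mkpt 0 1)).
  by apply: funext => t; rewrite mkptE.
set f := (fun t => rx (tau t v) (offx v.2) (offy v.2) - offx v.2).
set g := (fun t => ry (tau t v) (offx v.2) (offy v.2) - offy v.2).
have hf : {for t0, continuous f}.
  by have := cont_add (@rx_cont (offx v.2) (offy v.2) _ (@tau_cont v)) (@cont_cst (- offx v.2)); move=> /(_ t0).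
have hg : {for t0, continuous g}.
  by have := cont_add (@ry_cont (offx v.2) (offy v.2) _ (@tau_cont v)) (@cont_cst (- offy v.2)); move=> /(_ t0).
have h2 := @continuousZr_tmp _ pt _ f (mkpt 1 0) t0 hf.
have h3 := @continuousZr_tmp _ pt _ g (mkpt 0 1) t0 hg.
have h23 := continuousD h2 h3.
have h1 : {for t0, continuous (fun _ : RR => pp v)} by exact: cst_continuous.
have := continuousD h1 h23.
exact.
Qed.

Lemma side3 (s : RR) : 0 < 3/5 * s ^+ 2 - s + 3/5 ->
  [&& 3 * s ^+ 2 + - s * 5 + 3 != 0,
      (3 * s ^+ 2 + - s * 5 + 3) ^+ 2 + (- (s ^+ 2 * 5)) ^+ 2 != 0
    & 1 + s ^+ 2 != 0].
Proof.
move=> hD.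
have hX : 0 < 3 * s ^+ 2 + - s * 5 + 3 by lra.
apply/and3P; split; apply: lt0r_neq0 => //.
  have := exprn_gt0 2 hX; have := sqr_ge0 (- (s ^+ 2 * 5)); lra.
have := sqr_ge0 s; lra.
Qed.

Lemma coupAB (s : RR) :
  (rx s 5 0 - 5 - rx (- psi s) 5 (-6)) ^+ 2 + (ry s 5 0 - 6 - ry (- psi s) 5 (-6)) ^+ 2 = 25.
Proof.
have hD := Dn_gt0 s.
rewrite /rx /ry /psi /Dn in hD *.
field.
exact: side3.
Qed.

Lemma coupBA (s : RR) :
  (6 + rx (- s) 0 (-5) - rx (psi s) 6 (-5)) ^+ 2 + (5 + ry (- s) 0 (-5) - ry (psi s) 6 (-5)) ^+ 2 = 25.
Proof.
have hD := Dn_gt0 s.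
rewrite /rx /ry /psi /Dn in hD *.
field.
have hX : 0 < 3 * s ^+ 2 + - s * 5 + 3 by lra.
apply/and3P; split; apply: lt0r_neq0 => //.
  have := exprn_gt0 2 hX; have := sqr_ge0 (s ^+ 2 * 5); lra.
have := sqr_ge0 (- s); lra.
Qed.

Lemma rot_diff tau a b c d :
  (rx tau a b - rx tau c d) ^+ 2 + (ry tau a b - ry tau c d) ^+ 2 = (a - c) ^+ 2 + (b - d) ^+ 2.
Proof.
have h := opp1sq_neq0 tau.
rewrite /rx /ry; field; exact: h.
Qed.

Lemma rx00 tau : rx tau 0 0 = 0.
Proof. by rewrite /rx !mulr0 subr0 mul0r. Qed.
Lemma ry00 tau : ry tau 0 0 = 0.
Proof. by rewrite /ry !mulr0 addr0 mul0r. Qed.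

Lemma edistE (x y : pt) :
  Defs.edist x y = Num.sqrt ((x ord0 ord0 - y ord0 ord0) ^+ 2 + (x i1 ord0 - y i1 ord0) ^+ 2).
Proof.
rewrite /Defs.edist !big_ord_recl big_ord0 addr0 !mxE.
by have -> : lift ord0 (ord0 : 'I_1) = i1 by apply: val_inj.
Qed.

Lemma ed_core (x y x' y' : pt) (d1 d2 e1 e2 : RR) :
  x ord0 ord0 - y ord0 ord0 = d1 -> x i1 ord0 - y i1 ord0 = d2 ->
  x' ord0 ord0 - y' ord0 ord0 = e1 -> x' i1 ord0 - y' i1 ord0 = e2 ->
  d1 ^+ 2 + d2 ^+ 2 = e1 ^+ 2 + e2 ^+ 2 -> Defs.edist x y = Defs.edist x' y'.
Proof. by move=> h1 h2 h3 h4 h5; rewrite !edistE h1 h2 h3 h4 h5. Qed.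

Ltac simpPP := rewrite /PP /pp /mkpt !mxE /= /tau /offx /offy /Xz /Yz /oxz /oyz /O0 /O1 /O2 /O3 /O4 /=
  ?addr0 ?rx00 ?ry00 !(intrD, intrM, intrN) /=.

Definition Claim t (e : 'I_5 * 'I_5 * (int * int)) := forall i j,
  Defs.edist (PP t (i, j, e.1.1)) (PP t (i + e.2.1, j + e.2.2, e.1.2)) =
  Defs.edist (pp (i, j, e.1.1)) (pp (i + e.2.1, j + e.2.2, e.1.2)).

Lemma claim1 t : Claim t (O0, O0, (1, 0)).
Proof.
move=> i j; apply: (@ed_core _ _ _ _ 1 (-1) 1 (-1)); try (simpPP; ring); by [].
Qed.

Lemma claim2 t : Claim t (O0, O0, (0, 1)).
Proof. move=> i j; apply: (@ed_core _ _ _ _ (-5) (-6) (-5) (-6)); try (simpPP; ring); by []. Qed.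
Lemma claim3 t : Claim t (O0, O0, (-1, 1)).
Proof. move=> i j; apply: (@ed_core _ _ _ _ (-6) (-5) (-6) (-5)); try (simpPP; ring); by []. Qed.
Lemma claim4 t : Claim t (O0, O1, (0, 0)).
Proof.
move=> i j; apply: (@ed_core _ _ _ _ (- rx (Sq (2 * i) t) 5 0) (- ry (Sq (2 * i) t) 5 0) (-5) 0);
  try (simpPP; ring).
have := rot_diff (Sq (2 * i) t) 5 0 0 0; rewrite rx00 ry00; lra.
Qed.
Lemma claim5 t : Claim t (O0, O2, (0, 0)).
Proof.
move=> i j; apply: (@ed_core _ _ _ _ (- rx (Sq (2 * i) t) 6 (-5)) (- ry (Sq (2 * i) t) 6 (-5)) (-6) 5);
  try (simpPP; ring).
have := rot_diff (Sq (2 * i) t) 6 (-5) 0 0; rewrite rx00 ry00; lra.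
Qed.
Lemma claim6 t : Claim t (O1, O2, (0, 0)).
Proof.
move=> i j; apply: (@ed_core _ _ _ _ (rx (Sq (2 * i) t) 5 0 - rx (Sq (2 * i) t) 6 (-5))
   (ry (Sq (2 * i) t) 5 0 - ry (Sq (2 * i) t) 6 (-5)) (-1) 5); try (simpPP; ring).
have := rot_diff (Sq (2 * i) t) 5 0 6 (-5); lra.
Qed.
Lemma claim7 t : Claim t (O0, O3, (0, -1)).
Proof.
move=> i j; apply: (@ed_core _ _ _ _ (- rx (- Sq (2 * i + 1) t) 0 (-5)) (- ry (- Sq (2 * i + 1) t) 0 (-5)) 0 5);
  try (simpPP; ring).
have := rot_diff (- Sq (2 * i + 1) t) 0 (-5) 0 0; rewrite rx00 ry00; lra.
Qed.
Lemma claim8 t : Claim t (O0, O4, (0, -1)).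
Proof.
move=> i j; apply: (@ed_core _ _ _ _ (- rx (- Sq (2 * i + 1) t) 5 (-6)) (- ry (- Sq (2 * i + 1) t) 5 (-6)) (-5) 6);
  try (simpPP; ring).
have := rot_diff (- Sq (2 * i + 1) t) 5 (-6) 0 0; rewrite rx00 ry00; lra.
Qed.
Lemma claim9 t : Claim t (O3, O4, (0, 0)).
Proof.
move=> i j; apply: (@ed_core _ _ _ _ (rx (- Sq (2 * i + 1) t) 0 (-5) - rx (- Sq (2 * i + 1) t) 5 (-6))
   (ry (- Sq (2 * i + 1) t) 0 (-5) - ry (- Sq (2 * i + 1) t) 5 (-6)) (-5) 1); try (simpPP; ring).
have := rot_diff (- Sq (2 * i + 1) t) 0 (-5) 5 (-6); lra.
Qed.
Lemma claim10 t : I3 t -> Claim t (O1, O4, (0, 0)).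
Proof.
move=> ht i j; set s := Sq (2 * i) t.
apply: (@ed_core _ _ _ _ (rx s 5 0 - 5 - rx (- psi s) 5 (-6))
   (ry s 5 0 - 6 - ry (- psi s) 5 (-6)) (-5) 0); try (simpPP; rewrite ?(Sq_succ _ ht); ring).
have := coupAB s; lra.
Qed.
Lemma claim11 t : I3 t -> Claim t (O3, O2, (1, 0)).
Proof.
move=> ht i j.
have e2 : 2 * (i + 1) = 2 * i + 1 + 1 by ring.
apply: (@ed_core _ _ _ _ (6 + rx (- Sq (2 * i + 1) t) 0 (-5) - rx (psi (Sq (2 * i + 1) t)) 6 (-5))
   (5 + ry (- Sq (2 * i + 1) t) 0 (-5) - ry (psi (Sq (2 * i + 1) t)) 6 (-5)) 0 5); try (simpPP; rewrite ?e2 ?(Sq_succ _ ht); ring).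
have := coupBA (Sq (2 * i + 1) t); lra.
Qed.

Lemma all_claims t : I3 t -> forall e, e \in etypes -> Claim t e.
Proof.
move=> ht e; rewrite /etypes !inE => /orP [/eqP -> | /orP [/eqP -> | /orP [/eqP -> | /orP [/eqP -> | /orP [/eqP -> | /orP [/eqP -> | /orP [/eqP -> | /orP [/eqP -> | /orP [/eqP -> | /orP [/eqP -> | /eqP ->]]]]]]]]]].
- exact: claim1.
- exact: claim2.
- exact: claim3.
- exact: claim4.
- exact: claim5.
- exact: claim6.
- exact: claim7.
- exact: claim8.
- exact: claim9.
- exact: claim10.
- exact: claim11.
Qed.

Lemma PP_E1 t : I3 t -> forall v w, E1 v w -> Defs.edist (PP t v) (PP t w) = Defs.edist (pp v) (pp w).
Proof.
move=> ht v w /hasP [e He]; rewrite /epred => /and4P [/eqP h1 /eqP h2 /eqP h3 /eqP h4].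
case: v w h1 h2 h3 h4 => [[i j] s] [[i' j'] s'] /= h1 h2 h3 h4.
rewrite -h1 -h2 h3 h4; exact: all_claims.
Qed.

Lemma edist_sym (x y : pt) : Defs.edist x y = Defs.edist y x.
Proof.
rewrite !edistE; congr Num.sqrt.
by rewrite -(sqrrN (x ord0 ord0 - _)) -(sqrrN (x i1 ord0 - _)) !opprB.
Qed.

Lemma PP_EE t : I3 t -> forall v w, EE v w -> Defs.edist (PP t v) (PP t w) = Defs.edist (pp v) (pp w).
Proof.
move=> ht v w /orP [H|H]; first exact: PP_E1.
by rewrite edist_sym (PP_E1 ht H) edist_sym.
Qed.

Lemma non_iso : ~ (exists T : pt -> pt, isometry2 T /\ forall v, PP (1/3) v = T (pp v)).
Proof.
move=> [T [hT hP]].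
have H := hT (pp (0, 0, O1)) (pp (1, 0, O0)).
rewrite -!hP !edistE in H.
have := congr1 (fun r : RR => r ^+ 2) H.
rewrite /= !sqr_sqrtr; last first.
- by apply: addr_ge0; apply: sqr_ge0.
- by apply: addr_ge0; apply: sqr_ge0.
have hx : rx (1/3) 5 0 = 4 by rewrite /rx; field.
have hy : ry (1/3) 5 0 = 3 by rewrite /ry; field.
rewrite /PP /pp /mkpt !mxE /= /tau /offx /offy /Xz /Yz /oxz /oyz /O0 /O1 /= ?rx00 ?ry00.
rewrite hx hy.
lra.
Qed.

Lemma flexible : continuously_flexible EE pp.
Proof.
exists (1/3), PP; split; first by lra.
split; first exact: PP0.
split; first by move=> v; apply: continuous_subspaceT; exact: PP_cont.
split.
  move=> t; rewrite in_itv /= => ht v w E.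
  exact: (PP_EE ht).
exists (1/3); split; last exact: non_iso.
by rewrite in_itv /=; apply/andP; split; lra.
Qed.

Theorem mainTheorem4 :
  exists (V : countType) (E : V -> V -> bool) (p : V -> pt),
    crystal_framework E p /\ first_order_rigid E p /\ continuously_flexible E p.
Proof.
eexists; exists EE, pp.
split; first exact: crystal.
split; first exact: rigid.
exact: flexible.
Qed.
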